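(* Assume that $f_a(0)=-\infty$ for every $a\in A$. Let $\theta\in\mathbb R^n$ and let $p^*\in\mathcal M_1^+(A)$ with $I(p^* )-\sum_j\theta_j\langle p^*,H_j\rangle$ finite. Then $p^*$ satisfies the variational principle with parameters $\theta$ if and only if there exists $\alpha\in\mathbb R$ such that $p^*_a>0$ and $$f_a(p^*_a)=-\alpha-\sum_{j=1}^n\theta_jH_j(a)\qquad\text{for all }a\in A.$$
   Context: Let $A$ be a finite or countable set and $\mathcal M_1^+(A)$ the set of probability distributions $p=(p_a)_{a\in A}$ on $A$. For each $a\in A$ let $h_a:[0,1]\to\mathbb R$ be continuous and strictly concave with $h_a(0)=h_a(1)=0$, differentiable on $(0,1)$ with $h_a'(u)=-f_a(u)$, where $f_a$ extends to a continuous (necessarily strictly increasing) function on $(0,1]$; put $f_a(0)=\lim_{u\downarrow0}f_a(u)\in[-\infty,\infty)$. The generalised entropy is $I(p)=\sum_{a\in A}h_a(p_a)\in[0,+\infty]$. Let $H_1,\dots,H_n:A\to\mathbb R$ be functions bounded from below, and write $\langle p,X\rangle=\sum_{a}p_aX(a)$. A distribution $p^*\in\mathcal M_1^+(A)$ satisfies the variational principle with parameters $\theta=(\theta_1,\dots,\theta_n)\in\mathbb R^n$ if $+\infty> I(p^* )-\sum_{j=1}^n\theta_j\langle p^*,H_j\rangle\ \ge\ I(p)-\sum_{j=1}^n\theta_j\langle p,H_j\rangle$ for all $p\in\mathcal M_1^+(A)$. *)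

(* Defs.v *)
From Stdlib Require Import Reals Lra List.
Import ListNotations.
Open Scope R_scope.

Definition sum_list (l : list R) : R := fold_right Rplus 0 l.

Definition sum_upto (n : nat) (g : nat -> R) : R := sum_list (map g (seq 0 n)).

(* g is summable over A with sum s: the finite partial sums over finite sets
   F (duplicate-free lists) converge to s along the directed set of finite sets. *)
Definition HasSum {A : Type} (g : A -> R) (s : R) : Prop :=
  forall eps, 0 < eps -> exists F0 : list A,
    forall F : list A, NoDup F -> incl F0 F ->
      Rabs (sum_list (map g F) - s) < eps.

Definition SumPInf {A : Type} (g : A -> R) : Prop :=
  forall M, exists F0 : list A,
    forall F : list A, NoDup F -> incl F0 F -> M < sum_list (map g F).

Inductive Rbar : Type := Fin (r : R) | PInf | MInf.

Definition Rbar_le (x y : Rbar) : Prop :=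
  match x, y with
  | MInf, _ => True
  | _, PInf => True
  | Fin a, Fin b => a <= b
  | _, _ => False
  end.

(* scaling by a real, with the convention 0 * (+-infinity) = 0 *)
Definition Rbar_scale (c : R) (x : Rbar) : Rbar :=
  match x with
  | Fin r => Fin (c * r)
  | PInf => if Req_EM_T c 0 then Fin 0 else if Rlt_dec 0 c then PInf else MInf
  | MInf => if Req_EM_T c 0 then Fin 0 else if Rlt_dec 0 c then MInf else PInf
  end.

(* extended addition; None when undefined (+inf + -inf) *)
Definition Rbar_plus_opt (x y : Rbar) : option Rbar :=
  match x, y with
  | Fin a, Fin b => Some (Fin (a + b))
  | PInf, MInf | MInf, PInf => None
  | PInf, _ | _, PInf => Some PInf
  | MInf, _ | _, MInf => Some MInf
  end.

Definition Rbar_sum_opt (l : list Rbar) : option Rbar :=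
  fold_right (fun x acc => match acc with
                           | None => None
                           | Some y => Rbar_plus_opt x y
                           end) (Some (Fin 0)) l.

(* value in [-inf,+inf] of a series (as an unordered sum): either a finite sum
   or divergence to +infinity (the only cases occurring below, where the terms
   are bounded below by a summable family). *)
Definition esum_val {A : Type} (g : A -> R) (v : Rbar) : Prop :=
  (exists s, v = Fin s /\ HasSum g s) \/ (v = PInf /\ SumPInf g).

Definition countable (A : Type) : Prop :=
  exists enc : A -> nat, forall x y, enc x = enc y -> x = y.

Definition is_prob {A : Type} (p : A -> R) : Prop :=
  (forall a, 0 <= p a) /\ HasSum p 1.

Definition entropy_fun (h f : R -> R) : Prop :=
  (forall u, 0 <= u <= 1 -> continue_in h (fun x => 0 <= x <= 1) u) /\
  (forall x y t, 0 <= x <= 1 -> 0 <= y <= 1 -> x <> y -> 0 < t < 1 ->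
      t * h x + (1 - t) * h y < h (t * x + (1 - t) * y)) /\
  h 0 = 0 /\ h 1 = 0 /\
  (forall u, 0 < u < 1 -> derivable_pt_lim h u (- f u)) /\
  (forall u, 0 < u <= 1 -> continue_in f (fun x => 0 < x <= 1) u).

(* f_a(0) = lim_{u -> 0+} f_a(u) = -infinity *)
Definition f_zero_minf (f : R -> R) : Prop :=
  forall M, exists delta, 0 < delta /\ forall u, 0 < u < delta -> f u < M.

Definition I_val {A : Type} (h : A -> R -> R) (p : A -> R) (v : Rbar) : Prop :=
  esum_val (fun a => h a (p a)) v.

Definition pair_val {A : Type} (p : A -> R) (X : A -> R) (v : Rbar) : Prop :=
  esum_val (fun a => p a * X a) v.

Definition functional_val {A : Type} (h : A -> R -> R) (n : nat)
    (H : nat -> A -> R) (theta : nat -> R) (p : A -> R) (v : Rbar) : Prop :=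
  exists (vI : Rbar) (vH : nat -> Rbar),
    I_val h p vI /\
    (forall j, (j < n)%nat -> pair_val p (H j) (vH j)) /\
    Rbar_sum_opt (vI :: map (fun j => Rbar_scale (- theta j) (vH j)) (seq 0 n))
      = Some v.

(* pstar satisfies the variational principle with parameters theta:
   +inf > I(pstar) - sum theta_j <pstar,H_j> >= I(p) - sum theta_j <p,H_j>
   for every probability distribution p (for which the right-hand side is
   defined). *)
Definition variational_principle {A : Type} (h : A -> R -> R) (n : nat)
    (H : nat -> A -> R) (theta : nat -> R) (pstar : A -> R) : Prop :=
  exists c : R,
    functional_val h n H theta pstar (Fin c) /\
    forall p, is_prob p -> forall v, functional_val h n H theta p v ->
      Rbar_le v (Fin c).

(* Main.v *)
Require Import Defs.
From Stdlib Require Import Reals Lra Lia List Classical ClassicalEpsilon.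
Import ListNotations.
Open Scope R_scope.

Lemma sum_list_app l1 l2 : sum_list (l1 ++ l2) = sum_list l1 + sum_list l2.
Proof. induction l1; simpl; [lra|]. rewrite IHl1; lra. Qed.

Lemma lsum_plus {B} (f g : B -> R) l :
  sum_list (map (fun x => f x + g x) l) = sum_list (map f l) + sum_list (map g l).
Proof. induction l; simpl; [lra|]. rewrite IHl; lra. Qed.

Lemma lsum_scal {B} (c : R) (f : B -> R) l :
  sum_list (map (fun x => c * f x) l) = c * sum_list (map f l).
Proof. induction l; simpl; [lra|]. rewrite IHl; lra. Qed.

Lemma lsum_le {B} (f g : B -> R) l : (forall x, f x <= g x) ->
  sum_list (map f l) <= sum_list (map g l).
Proof. intros Hfg; induction l; simpl; [lra|]. specialize (Hfg a); lra. Qed.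

Lemma lsum_ext {B} (f g : B -> R) l : (forall x, f x = g x) ->
  sum_list (map f l) = sum_list (map g l).
Proof. intros Hfg; induction l; simpl; [lra|]. rewrite Hfg, IHl; lra. Qed.

Lemma lsum_zero {B} (l : list B) : sum_list (map (fun _ => 0) l) = 0.
Proof. induction l; simpl; lra. Qed.

Lemma nodup_cover {B} (l : list B) : exists F, NoDup F /\ incl l F /\ incl F l.
Proof.
  induction l as [|x l IH].
  - exists []. repeat split; try constructor; intros y Hy; inversion Hy.
  - destruct IH as [F [HN [H1 H2]]].
    destruct (classic (In x F)) as [Hin|Hnin].
    + exists F. repeat split; auto.
      * intros y [<-|Hy]; auto.
      * intros y Hy; right; auto.
    + exists (x :: F). repeat split.
      * constructor; auto.
      * intros y [<-|Hy]; [left|right]; auto.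
      * intros y [<-|Hy]; [left|right]; auto.
Qed.

Lemma incl_app_l {B} (l1 l2 F : list B) : incl (l1 ++ l2) F -> incl l1 F.
Proof. intros Hi y Hy; apply Hi, in_or_app; auto. Qed.
Lemma incl_app_r {B} (l1 l2 F : list B) : incl (l1 ++ l2) F -> incl l2 F.
Proof. intros Hi y Hy; apply Hi, in_or_app; auto. Qed.

Lemma cover2 {B} (l1 l2 : list B) : exists F, NoDup F /\ incl l1 F /\ incl l2 F.
Proof.
  destruct (nodup_cover (l1 ++ l2)) as [F [HN [Hi _]]].
  exists F; split; auto; split; eauto using incl_app_l, incl_app_r.
Qed.

Section S.
Context {A : Type}.

Lemma HasSum_ext (f g : A -> R) s : (forall a, f a = g a) -> HasSum f s -> HasSum g s.
Proof.
  intros He Hs eps Heps. destruct (Hs eps Heps) as [F0 HF0]. exists F0.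
  intros F HN Hi. rewrite <- (lsum_ext f g F He). auto.
Qed.

Lemma HasSum_plus (f g : A -> R) s t : HasSum f s -> HasSum g t ->
  HasSum (fun a => f a + g a) (s + t).
Proof.
  intros Hf Hg eps Heps.
  destruct (Hf (eps/2) ltac:(lra)) as [F1 H1].
  destruct (Hg (eps/2) ltac:(lra)) as [F2 H2].
  exists (F1 ++ F2). intros F HN Hi. rewrite lsum_plus.
  specialize (H1 F HN (incl_app_l _ _ _ Hi)).
  specialize (H2 F HN (incl_app_r _ _ _ Hi)).
  apply Rabs_def2 in H1; apply Rabs_def2 in H2. apply Rabs_def1; lra.
Qed.

Lemma HasSum_scal (c : R) (f : A -> R) s : HasSum f s -> HasSum (fun a => c * f a) (c * s).
Proof.
  intros Hf eps Heps.
  destruct (Hf (eps / (Rabs c + 1))) as [F0 H0].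
  { apply Rdiv_lt_0_compat; [lra|]. pose proof (Rabs_pos c); lra. }
  exists F0. intros F HN Hi. rewrite lsum_scal.
  specialize (H0 F HN Hi).
  replace (c * sum_list (map f F) - c * s) with (c * (sum_list (map f F) - s)) by ring.
  rewrite Rabs_mult.
  pose proof (Rabs_pos c). pose proof (Rabs_pos (sum_list (map f F) - s)).
  apply Rle_lt_trans with ((Rabs c + 1) * Rabs (sum_list (map f F) - s)).
  { nra. }
  replace eps with ((Rabs c + 1) * (eps / (Rabs c + 1))) by (field; lra).
  apply Rmult_lt_compat_l; lra.
Qed.

Lemma HasSum_zero : HasSum (fun _ : A => 0) 0.
Proof.
  intros eps Heps. exists []. intros F _ _. rewrite lsum_zero.
  rewrite Rminus_0_r, Rabs_R0; auto.
Qed.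

Lemma HasSum_le (f g : A -> R) s t : (forall a, f a <= g a) -> HasSum f s -> HasSum g t -> s <= t.
Proof.
  intros Hle Hf Hg. destruct (Rle_dec s t) as [|Hn]; auto. exfalso.
  set (eps := (s - t) / 2).
  destruct (Hf eps ltac:(unfold eps; lra)) as [F1 H1].
  destruct (Hg eps ltac:(unfold eps; lra)) as [F2 H2].
  destruct (cover2 F1 F2) as [F [HN [Hi1 Hi2]]].
  specialize (H1 F HN Hi1). specialize (H2 F HN Hi2).
  pose proof (lsum_le f g F Hle).
  apply Rabs_def2 in H1; apply Rabs_def2 in H2. unfold eps in *; lra.
Qed.

Lemma HasSum_unique (f : A -> R) s t : HasSum f s -> HasSum f t -> s = t.
Proof.
  intros H1 H2. apply Rle_antisym; eapply HasSum_le; eauto; intros; lra.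
Qed.

Lemma SumPInf_le (f g : A -> R) t : (forall a, f a <= g a) -> HasSum g t -> SumPInf f -> False.
Proof.
  intros Hle Hg Hf.
  destruct (Hf (t + 1)) as [F1 H1].
  destruct (Hg 1 ltac:(lra)) as [F2 H2].
  destruct (cover2 F1 F2) as [F [HN [Hi1 Hi2]]].
  specialize (H1 F HN Hi1). specialize (H2 F HN Hi2).
  pose proof (lsum_le f g F Hle).
  apply Rabs_def2 in H2. lra.
Qed.

Lemma SumPInf_scal (c : R) (f : A -> R) : 0 < c -> SumPInf f -> SumPInf (fun a => c * f a).
Proof.
  intros Hc Hf M. destruct (Hf (M / c)) as [F0 H0]. exists F0.
  intros F HN Hi. rewrite lsum_scal. specialize (H0 F HN Hi).
  apply Rmult_lt_compat_l with (r := c) in H0; auto.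
  replace (c * (M / c)) with M in H0 by (field; lra). auto.
Qed.

Lemma SumPInf_plus (f g : A -> R) t : SumPInf f -> HasSum g t -> SumPInf (fun a => f a + g a).
Proof.
  intros Hf Hg M.
  destruct (Hf (M - t + 1)) as [F1 H1].
  destruct (Hg 1 ltac:(lra)) as [F2 H2].
  exists (F1 ++ F2). intros F HN Hi. rewrite lsum_plus.
  specialize (H1 F HN (incl_app_l _ _ _ Hi)).
  specialize (H2 F HN (incl_app_r _ _ _ Hi)).
  apply Rabs_def2 in H2. lra.
Qed.

Definition indf (a x : A) : R := if excluded_middle_informative (x = a) then 1 else 0.

Lemma sum_ind_nin (a : A) F : ~ In a F -> sum_list (map (indf a) F) = 0.
Proof.
  induction F as [|x F IH]; simpl; intros Hn; [lra|].
  unfold indf at 1. destruct (excluded_middle_informative (x = a)) as [->|]; [tauto|].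
  rewrite IH; [lra|tauto].
Qed.

Lemma sum_ind_in (a : A) F : NoDup F -> In a F -> sum_list (map (indf a) F) = 1.
Proof.
  induction F as [|x F IH]; simpl; intros HN Hin; [tauto|].
  inversion HN; subst.
  unfold indf at 1. destruct (excluded_middle_informative (x = a)) as [->|Hne].
  - rewrite sum_ind_nin; auto; lra.
  - destruct Hin as [->|Hin]; [tauto|]. rewrite IH; auto; lra.
Qed.

Lemma HasSum_ind (a : A) : HasSum (indf a) 1.
Proof.
  intros eps Heps. exists [a]. intros F HN Hi.
  rewrite sum_ind_in; auto. rewrite Rminus_diag, Rabs_R0; auto.
  apply Hi; left; auto.
Qed.

Lemma HasSum_supp2 (d : A -> R) a b : a <> b ->
  (forall x, x <> a -> x <> b -> d x = 0) -> HasSum d (d a + d b).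
Proof.
  intros Hab Hd.
  apply HasSum_ext with (f := fun x => d a * indf a x + d b * indf b x).
  - intros x. unfold indf.
    destruct (excluded_middle_informative (x = a)) as [Hxa|Ha];
    destruct (excluded_middle_informative (x = b)) as [Hxb|Hb].
    + subst; tauto.
    + subst; lra.
    + subst; lra.
    + rewrite (Hd x Ha Hb); lra.
  - replace (d a + d b) with (d a * 1 + d b * 1) by ring.
    apply HasSum_plus; apply HasSum_scal; apply HasSum_ind.
Qed.

End S.

Definition shift (x : Rbar) (s : R) : Rbar :=
  match x with Fin r => Fin (r + s) | y => y end.

Lemma plus_shift x y s t : Rbar_plus_opt (shift x s) (shift y t) =
  option_map (fun z => shift z (s + t)) (Rbar_plus_opt x y).
Proof.
  destruct x, y; simpl; auto. f_equal; f_equal; ring.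
Qed.

Lemma scale_shift c x s : Rbar_scale c (shift x s) = shift (Rbar_scale c x) (c * s).
Proof.
  destruct x; simpl; [f_equal; ring| |];
  destruct (Req_EM_T c 0) as [->|]; simpl; try (f_equal; ring);
  destruct (Rlt_dec 0 c); auto.
Qed.

Lemma sum_shift (e : nat -> Rbar) (s : nat -> R) ks v :
  Rbar_sum_opt (map e ks) = Some v ->
  Rbar_sum_opt (map (fun k => shift (e k) (s k)) ks) = Some (shift v (sum_list (map s ks))).
Proof.
  revert v; induction ks as [|k ks IH]; simpl; intros v Hv.
  - inversion Hv; subst; simpl. f_equal; f_equal; ring.
  - destruct (Rbar_sum_opt (map e ks)) as [y|] eqn:Hy; [|discriminate].
    rewrite (IH y eq_refl).
    change (Rbar_plus_opt (shift (e k) (s k)) (shift y (sum_list (map s ks))) =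
            Some (shift v (s k + sum_list (map s ks)))).
    rewrite plus_shift, Hv. reflexivity.
Qed.

Lemma allFin l c : Rbar_sum_opt l = Some (Fin c) -> forall x, In x l -> exists r, x = Fin r.
Proof.
  revert c; induction l as [|y l IH]; simpl; intros c Hc x Hx; [tauto|].
  destruct (Rbar_sum_opt l) as [z|] eqn:Hz; [|discriminate].
  destruct Hx as [<-|Hx].
  - destruct y, z; simpl in Hc; try discriminate; eauto.
  - destruct y, z; simpl in Hc; try discriminate; eauto.
Qed.

Lemma noMInf l v : Rbar_sum_opt l = Some v -> v <> MInf -> forall x, In x l -> x <> MInf.
Proof.
  revert v; induction l as [|y l IH]; simpl; intros v Hc Hv x Hx; [tauto|].
  destruct (Rbar_sum_opt l) as [z|] eqn:Hz; [|discriminate].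
  destruct Hx as [<-|Hx].
  - destruct y, z; simpl in Hc; try discriminate; inversion Hc; subst; congruence.
  - apply (IH z eq_refl); auto.
    intros ->. destruct y; simpl in Hc; try discriminate; inversion Hc; subst; congruence.
Qed.

Section C.
Context {A : Type}.

Definition lbd (G : A -> R) := exists L sL, HasSum L sL /\ forall a, L a <= G a.

Definition sumG (G : nat -> A -> R) ks a := sum_list (map (fun k => G k a) ks).

Lemma comps_fin (G : nat -> A -> R) e ks :
  (forall k, In k ks -> exists w, e k = Fin w /\ HasSum (G k) w) ->
  exists W, Rbar_sum_opt (map e ks) = Some (Fin W) /\ HasSum (sumG G ks) W.
Proof.
  unfold sumG; induction ks as [|k ks IH]; simpl; intros Hk.
  - exists 0; split; auto. apply HasSum_zero.
  - destruct IH as [W [H1 H2]]; [intros; apply Hk; auto|].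
    destruct (Hk k (or_introl eq_refl)) as [w [Hw Hs]].
    exists (w + W). rewrite H1, Hw. split; [reflexivity|].
    apply HasSum_plus; auto.
Qed.

Lemma LB (G : nat -> A -> R) ks : (forall k, In k ks -> lbd (G k)) -> lbd (sumG G ks).
Proof.
  unfold sumG; induction ks as [|k ks IH]; simpl; intros Hk.
  - exists (fun _ => 0), 0; split; [apply HasSum_zero|]. intros; lra.
  - destruct IH as [L [sL [H1 H2]]]; [intros; apply Hk; auto|].
    destruct (Hk k (or_introl eq_refl)) as [L0 [s0 [H3 H4]]].
    exists (fun a => L0 a + L a), (s0 + sL); split; [apply HasSum_plus; auto|].
    intros a; specialize (H2 a); specialize (H4 a); lra.
Qed.

Lemma UB (G : nat -> A -> R) ks : (forall k, In k ks -> lbd (G k)) ->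
  forall U sU, HasSum U sU -> (forall a, sumG G ks a <= U a) ->
  forall k, In k ks -> exists V sV, HasSum V sV /\ forall a, G k a <= V a.
Proof.
  unfold sumG; induction ks as [|k0 ks IH]; simpl; intros Hk U sU HU Hle k Hin; [tauto|].
  destruct (Hk k0 (or_introl eq_refl)) as [L0 [s0 [H3 H4]]].
  destruct Hin as [<-|Hin].
  - destruct (LB G ks) as [L [sL [H1 H2]]]; [intros; apply Hk; auto|].
    exists (fun a => U a + - (1) * L a), (sU + - (1) * sL).
    split; [apply HasSum_plus; auto; apply HasSum_scal; auto|].
    intros a; specialize (H2 a); specialize (Hle a); unfold sumG in H2; lra.
  - apply (IH (fun k Hk' => Hk k (or_intror Hk')) (fun a => U a + - (1) * L0 a) (sU + - (1) * s0)); auto.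
    + apply HasSum_plus; auto; apply HasSum_scal; auto.
    + intros a; specialize (H4 a); specialize (Hle a); lra.
Qed.

Lemma comps_main (G : nat -> A -> R) e ks v :
  (forall k, In k ks -> esum_val (G k) (e k) /\ lbd (G k)) ->
  Rbar_sum_opt (map e ks) = Some v ->
  forall U sU, HasSum U sU -> (forall a, sumG G ks a <= U a) ->
  exists W, v = Fin W /\ HasSum (sumG G ks) W.
Proof.
  intros Hk Hv U sU HU Hle.
  destruct (comps_fin G e ks) as [W [H1 H2]].
  - intros k Hin. destruct (Hk k Hin) as [[Hf|[_ Hp]] _]; auto.
    exfalso. destruct (UB G ks (fun k Hk' => proj2 (Hk k Hk')) U sU HU Hle k Hin)
      as [V [sV [HV HGV]]].
    eapply SumPInf_le; eauto.
  - exists W; split; auto. rewrite Hv in H1; inversion H1; auto.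
Qed.

Lemma comps_fin2 (G : nat -> A -> R) e ks c :
  (forall k, In k ks -> esum_val (G k) (e k)) ->
  Rbar_sum_opt (map e ks) = Some (Fin c) -> HasSum (sumG G ks) c.
Proof.
  intros Hk Hv.
  destruct (comps_fin G e ks) as [W [H1 H2]].
  - intros k Hin. destruct (Hk k Hin) as [Hf|[Hp _]]; auto.
    exfalso. destruct (allFin _ _ Hv (e k)) as [r Hr]; [apply in_map; auto|congruence].
  - rewrite Hv in H1; inversion H1; subst; auto.
Qed.

Lemma esum_shift (g g' d : A -> R) v s : esum_val g v -> HasSum d s ->
  (forall x, g' x = g x + d x) -> esum_val g' (shift v s).
Proof.
  intros [[w [-> Hw]]|[-> Hp]] Hd He.
  - left. exists (w + s); split; auto. apply HasSum_ext with (fun x => g x + d x).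
    { intros; auto. } apply HasSum_plus; auto.
  - right; split; auto. intros M. destruct (SumPInf_plus g d s Hp Hd M) as [F0 HF].
    exists F0; intros F HN Hi. rewrite (lsum_ext g' (fun x => g x + d x)); auto.
Qed.

End C.

Section F.
Context {A : Type} (h : A -> R -> R) (n : nat) (H : nat -> A -> R) (theta : nat -> R).

Definition CG (p : A -> R) (k : nat) (a : A) : R :=
  match k with O => h a (p a) | S j => - theta j * (p a * H j a) end.
Definition Ce (vI : Rbar) (vH : nat -> Rbar) (k : nat) : Rbar :=
  match k with O => vI | S j => Rbar_scale (- theta j) (vH j) end.

Lemma list_eq vI vH : vI :: map (fun j => Rbar_scale (- theta j) (vH j)) (seq 0 n)
   = map (Ce vI vH) (seq 0 (S n)).
Proof. simpl. f_equal. rewrite <- seq_shift, map_map. reflexivity. Qed.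

Definition Sx (a : A) := sum_upto n (fun j => theta j * H j a).

Lemma CG_sum p a : sumG (CG p) (seq 0 (S n)) a = h a (p a) - p a * Sx a.
Proof.
  unfold sumG, Sx, sum_upto. simpl. rewrite <- seq_shift, map_map.
  rewrite (lsum_ext _ (fun j => (- p a) * (theta j * H j a))).
  2: { intros; simpl; ring. }
  rewrite lsum_scal. ring.
Qed.

Lemma comps_of_functional p v :
  (forall j, (j < n)%nat -> exists m, forall a, m <= H j a) ->
  is_prob p -> (forall a, 0 <= h a (p a)) ->
  functional_val h n H theta p v -> v <> MInf ->
  exists vI vH, Rbar_sum_opt (map (Ce vI vH) (seq 0 (S n))) = Some v /\
   forall k, In k (seq 0 (S n)) -> esum_val (CG p k) (Ce vI vH k) /\ lbd (CG p k).
Proof.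
  intros hH hp hh [vI [vH [HI [HH Hs]]]] Hv.
  rewrite list_eq in Hs. exists vI, vH; split; auto.
  intros k Hk. pose proof (noMInf _ _ Hs Hv (Ce vI vH k) (in_map _ _ _ Hk)) as HnM.
  destruct k as [|j].
  - split; auto. exists (fun _ => 0), 0; split; [apply HasSum_zero|]. intros; simpl; auto.
  - apply in_seq in Hk. assert (Hj : (j < n)%nat) by lia.
    destruct (hH j Hj) as [m Hm].
    specialize (HH j Hj). simpl in HnM |- *.
    destruct HH as [[s [Hvs Hss]]|[Hvs Hsp]]; rewrite Hvs in HnM |- *; simpl in HnM |- *.
    + split.
      * left. exists (- theta j * s); split; auto. apply HasSum_scal; auto.
      * exists (fun a => - theta j * (p a * H j a)), (- theta j * s); split.
        { apply HasSum_scal; auto. } intros; simpl; lra.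
    + destruct (Req_EM_T (- theta j) 0) as [E|NE].
      * assert (HZ : HasSum (fun a => - theta j * (p a * H j a)) 0).
        { apply HasSum_ext with (fun _ => 0). { intros; rewrite E; ring. } apply HasSum_zero. }
        split.
        { left; exists 0; split; auto. }
        { exists (fun a => - theta j * (p a * H j a)), 0; split; auto. intros; simpl; lra. }
      * destruct (Rlt_dec 0 (- theta j)) as [Pos|NP]; [|congruence].
        split.
        { right; split; auto. apply SumPInf_scal; auto. }
        { exists (fun a => - theta j * (m * p a)), (- theta j * (m * 1)); split.
          - apply HasSum_scal, HasSum_scal. destruct hp as [_ H1]. exact H1.
          - intros a. apply Rmult_le_compat_l; [lra|]. specialize (Hm a). pose proof (proj1 hp a). nra. }
Qed.
End F.

Lemma conc_w (h f : R -> R) : entropy_fun h f -> forall x y t, 0 <= x <= 1 -> 0 <= y <= 1 ->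
  0 < t < 1 -> t * h x + (1 - t) * h y <= h (t * x + (1 - t) * y).
Proof.
  intros [_ [Hc _]] x y t Hx Hy Ht. destruct (Req_dec x y) as [->|Hne].
  - replace (t * y + (1 - t) * y) with y by ring. lra.
  - left; apply Hc; auto.
Qed.

Lemma h_nonneg (h f : R -> R) : entropy_fun h f -> forall x, 0 <= x <= 1 -> 0 <= h x.
Proof.
  intros He x Hx. pose proof He as [_ [_ [H0 [H1 _]]]].
  destruct (Req_dec x 0) as [->|N0]; [lra|].
  destruct (Req_dec x 1) as [->|N1]; [lra|].
  pose proof (conc_w h f He 0 1 (1 - x) ltac:(lra) ltac:(lra) ltac:(lra)).
  replace ((1 - x) * 0 + (1 - (1 - x)) * 1) with x in H by ring. rewrite H0, H1 in H. lra.
Qed.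

Lemma chord (h f : R -> R) : entropy_fun h f -> forall y e, 0 < e < y -> y <= 1 ->
  h y - h (y - e) <= (e / y) * h y.
Proof.
  intros He y e He' Hy. pose proof He as [_ [_ [H0 _]]].
  pose proof (conc_w h f He 0 y (e / y) ltac:(lra) ltac:(lra)) as Hc.
  assert (0 < e / y < 1).
  { split. apply Rdiv_lt_0_compat; lra.
    apply Rmult_lt_reg_r with y; [lra|]. unfold Rdiv; rewrite Rmult_assoc, Rinv_l; lra. }
  specialize (Hc H).
  replace (e / y * 0 + (1 - e / y) * y) with (y - e) in Hc by (field; lra).
  rewrite H0 in Hc. lra.
Qed.

Lemma tangent (h f : R -> R) : entropy_fun h f -> forall y x, 0 < y < 1 -> 0 <= x <= 1 ->
  h x <= h y - f y * (x - y).
Proof.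
  intros He y x Hy Hx. pose proof He as [_ [_ [_ [_ [Hd _]]]]].
  destruct (Rle_dec (h x) (h y - f y * (x - y))) as [|Hn]; auto. exfalso.
  set (gap := h x - h y + f y * (x - y)).
  assert (Hg : 0 < gap) by (unfold gap; lra).
  assert (Hne : x <> y) by (intro; subst; unfold gap in Hg; lra).
  set (D := Rabs (x - y)).
  assert (HD : 0 < D) by (apply Rabs_pos_lt; lra).
  destruct (Hd y Hy (gap / (2 * D))) as [delta Hdel].
  { apply Rdiv_lt_0_compat; lra. }
  set (t := Rmin (1/2) (delta / (2 * D))).
  assert (Ht : 0 < t <= 1/2).
  { unfold t; split. apply Rmin_pos; [lra|]. apply Rdiv_lt_0_compat; [apply cond_pos|lra].
    apply Rmin_l. }
  assert (Htd : t * D < delta).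
  { assert (t <= delta / (2 * D)) by apply Rmin_r.
    pose proof (cond_pos delta).
    apply Rle_lt_trans with (delta / (2 * D) * D). { apply Rmult_le_compat_r; lra. }
    replace (delta / (2 * D) * D) with (delta / 2) by (field; lra). lra. }
  set (k := t * (x - y)).
  assert (Hk0 : k <> 0) by (unfold k; apply Rmult_integral_contrapositive; split; lra).
  assert (Hkd : Rabs k < delta) by (unfold k; rewrite Rabs_mult, Rabs_pos_eq by lra; fold D; lra).
  specialize (Hdel k Hk0 Hkd).
  pose proof (conc_w h f He x y t Hx ltac:(lra) ltac:(lra)) as Hc.
  replace (t * x + (1 - t) * y) with (y + k) in Hc by (unfold k; ring).
  set (q := (h (y + k) - h y) / k) in Hdel.
  assert (Hq : h (y + k) - h y = k * q) by (unfold q; field; auto).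
  apply Rabs_def2 in Hdel.
  assert (H1 : t * ((x - y) * q) >= t * (h x - h y)).
  { replace (t * ((x - y) * q)) with (k * q) by (unfold k; ring). lra. }
  assert (H2 : (x - y) * q >= h x - h y).
  { apply Rle_ge, Rmult_le_reg_l with t; lra. }
  assert (H3 : (x - y) * (q + f y) <= D * (gap / (2 * D))).
  { apply Rle_trans with (Rabs ((x - y) * (q + f y))). apply Rle_abs.
    rewrite Rabs_mult. fold D. apply Rmult_le_compat_l; [lra|].
    apply Rabs_le; lra. }
  replace (D * (gap / (2 * D))) with (gap / 2) in H3 by (field; lra).
  unfold gap in *. lra.
Qed.

Section P.
Context {A : Type}.

Lemma ind_eq (a x : A) : x = a -> indf a x = 1.
Proof. intros ->; unfold indf; destruct (excluded_middle_informative (a = a)); tauto. Qed.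
Lemma ind_neq (a x : A) : x <> a -> indf a x = 0.
Proof. intros Hn; unfold indf; destruct (excluded_middle_informative (x = a)); tauto. Qed.

Lemma prob_two (p : A -> R) a b : is_prob p -> a <> b -> p a + p b <= 1.
Proof.
  intros [Hn Hs] Hab.
  replace (p a + p b) with (p a * 1 + p b * 1) by ring.
  eapply HasSum_le; [|apply HasSum_plus; apply HasSum_scal; apply HasSum_ind|exact Hs].
  intros x; cbv beta. destruct (classic (x = a)) as [Ha|Ha]; destruct (classic (x = b)) as [Hb|Hb].
  - subst; tauto.
  - rewrite (ind_eq _ _ Ha), (ind_neq _ _ Hb). subst; lra.
  - rewrite (ind_neq _ _ Ha), (ind_eq _ _ Hb). subst; lra.
  - rewrite (ind_neq _ _ Ha), (ind_neq _ _ Hb). specialize (Hn x); lra.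
Qed.

Lemma prob_le1 (p : A -> R) a : is_prob p -> p a <= 1.
Proof.
  intros [Hn Hs]. replace (p a) with (p a * 1) by ring.
  eapply HasSum_le; [|apply HasSum_scal; apply HasSum_ind|exact Hs].
  intros x. destruct (classic (x = a)) as [Ha|Ha].
  - rewrite (ind_eq _ _ Ha). subst; lra.
  - rewrite (ind_neq _ _ Ha). specialize (Hn x); lra.
Qed.

Lemma prob_pos (p : A -> R) : is_prob p -> exists b, 0 < p b.
Proof.
  intros [Hn Hs]. apply NNPP; intros Hno.
  assert (HasSum p 0).
  { apply HasSum_ext with (fun _ => 0); [|apply HasSum_zero].
    intros a. specialize (Hn a). destruct (Rle_lt_dec (p a) 0); [lra|].
    exfalso; apply Hno; eauto. }
  pose proof (HasSum_unique _ _ _ Hs H). lra.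
Qed.

Lemma prob_single (p : A -> R) x : is_prob p -> (forall y, y = x) -> p x = 1.
Proof.
  intros [Hn Hs] Hall.
  assert (HasSum p (p x * 1)).
  { apply HasSum_ext with (fun y => p x * indf x y); [|apply HasSum_scal, HasSum_ind].
    intros y. rewrite (ind_eq _ _ (Hall y)). rewrite (Hall y). ring. }
  pose proof (HasSum_unique _ _ _ Hs H). lra.
Qed.

Definition pert (p : A -> R) a b (e : R) x := p x + e * indf a x - e * indf b x.

Lemma pert_a p a b e : a <> b -> pert p a b e a = p a + e.
Proof. intros Hab; unfold pert; rewrite (ind_eq a a eq_refl), (ind_neq b a Hab); ring. Qed.
Lemma pert_b p a b e : a <> b -> pert p a b e b = p b - e.
Proof. intros Hab; unfold pert; rewrite (ind_eq b b eq_refl), (ind_neq a b (not_eq_sym Hab)); ring. Qed.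
Lemma pert_x p a b e x : x <> a -> x <> b -> pert p a b e x = p x.
Proof. intros Ha Hb; unfold pert; rewrite (ind_neq _ _ Ha), (ind_neq _ _ Hb); ring. Qed.

Lemma pert_prob p a b e : is_prob p -> a <> b -> 0 <= p a + e -> 0 <= p b - e ->
  is_prob (pert p a b e).
Proof.
  intros [Hn Hs] Hab H1 H2. split.
  - intros x. destruct (classic (x = a)) as [->|Ha]; [rewrite pert_a; auto|].
    destruct (classic (x = b)) as [->|Hb]; [rewrite pert_b; auto|].
    rewrite pert_x; auto.
  - replace 1 with (1 + e * 1 + - e * 1) by ring. unfold pert.
    apply HasSum_ext with (fun x => (p x + e * indf a x) + - e * indf b x).
    { intros; ring. }
    apply HasSum_plus; [apply HasSum_plus|]; auto; apply HasSum_scal, HasSum_ind.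
Qed.
End P.

Section PF.
Context {A : Type} (h : A -> R -> R) (n : nat) (H : nat -> A -> R) (theta : nat -> R).

Lemma pert_functional p c a b e : a <> b ->
  functional_val h n H theta p (Fin c) ->
  functional_val h n H theta (pert p a b e)
   (Fin (c + (h a (p a + e) - h a (p a)) + (h b (p b - e) - h b (p b))
           - e * (Sx n H theta a - Sx n H theta b))).
Proof.
  intros Hab [vI [vH [HI [HH Hs]]]].
  set (p' := pert p a b e).
  set (d := fun x => h x (p' x) - h x (p x)).
  set (dj := fun j x => p' x * H j x - p x * H j x).
  assert (Hd : HasSum d (d a + d b)).
  { apply HasSum_supp2; auto. intros x Ha Hb. unfold d, p'. rewrite pert_x; auto; ring. }
  assert (Hdj : forall j, HasSum (dj j) (dj j a + dj j b)).
  { intros j. apply HasSum_supp2; auto. intros x Ha Hb. unfold dj, p'. rewrite pert_x; auto; ring. }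
  exists (shift vI (d a + d b)), (fun j => shift (vH j) (dj j a + dj j b)).
  split; [|split].
  - apply (esum_shift _ _ d _ _ HI Hd). intros x; unfold d; ring.
  - intros j Hj. apply (esum_shift _ _ (dj j) _ _ (HH j Hj) (Hdj j)). intros x; unfold dj; ring.
  - rewrite list_eq. rewrite list_eq in Hs.
    set (sk := fun k => match k with O => d a + d b
                          | S j => - theta j * (dj j a + dj j b) end).
    rewrite (map_ext _ (fun k => shift (Ce theta vI vH k) (sk k))).
    2: { intros [|j]; simpl; auto. apply scale_shift. }
    rewrite (sum_shift _ sk _ _ Hs). simpl. f_equal. f_equal.
    rewrite <- seq_shift, map_map.
    unfold dj, d, p'. rewrite pert_a, pert_b by auto.
    rewrite (lsum_ext _ (fun j => (- e) * (theta j * H j a) + e * (theta j * H j b))).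
    2: { intros j; simpl. unfold dj, p'. rewrite (pert_a p a b e Hab), (pert_b p a b e Hab). ring. }
    rewrite lsum_plus, !lsum_scal. unfold Sx, sum_upto. ring.
Qed.

Lemma pert_le p c a b e :
  is_prob p -> functional_val h n H theta p (Fin c) ->
  (forall q, is_prob q -> forall v, functional_val h n H theta q v -> Rbar_le v (Fin c)) ->
  a <> b -> 0 <= p a + e -> 0 <= p b - e ->
  (h a (p a + e) - h a (p a)) + (h b (p b - e) - h b (p b))
           - e * (Sx n H theta a - Sx n H theta b) <= 0.
Proof.
  intros Hp Hf HVP Hab H1 H2.
  pose proof (HVP _ (pert_prob p a b e Hp Hab H1 H2) _ (pert_functional p c a b e Hab Hf)).
  simpl in H0. lra.
Qed.
End PF.

Theorem theorem1
  (A : Type) (hA : countable A)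
  (h f : A -> R -> R)
  (hhf : forall a, entropy_fun (h a) (f a))
  (hf0 : forall a, f_zero_minf (f a))
  (n : nat) (H : nat -> A -> R)
  (hH : forall j, (j < n)%nat -> exists m, forall a, m <= H j a)
  (theta : nat -> R)
  (pstar : A -> R) (hp : is_prob pstar)
  (hfin : exists c, functional_val h n H theta pstar (Fin c)) :
  variational_principle h n H theta pstar <->
  exists alpha : R, forall a,
    0 < pstar a /\
    f a (pstar a) = - alpha - sum_upto n (fun j => theta j * H j a).
Proof.
  set (Sv := Sx n H theta).
  change (variational_principle h n H theta pstar <->
    exists alpha : R, forall a, 0 < pstar a /\ f a (pstar a) = - alpha - Sv a).
  split.
  - intros [c [Hc HVP]].
    assert (Hpos : forall a, 0 < pstar a).
    { intros a. destruct (Rlt_le_dec 0 (pstar a)) as [|Hle]; auto. exfalso.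
      assert (Ha0 : pstar a = 0) by (pose proof (proj1 hp a); lra).
      destruct (prob_pos pstar hp) as [b Hb].
      assert (Hab : a <> b) by (intros ->; lra).
      set (y := pstar b) in *.
      assert (Hy1 : y <= 1) by apply (prob_le1 pstar b hp).
      set (K := h b y / y + Sv a - Sv b).
      destruct (hf0 a (- K)) as [delta [Hdel Hf]].
      set (eps := Rmin (delta / 2) (y / 2)).
      assert (He1 : 0 < eps) by (apply Rmin_pos; lra).
      assert (He2 : eps <= delta / 2) by apply Rmin_l.
      assert (He3 : eps <= y / 2) by apply Rmin_r.
      pose proof (pert_le h n H theta pstar c a b eps hp Hc HVP Hab ltac:(lra) ltac:(fold y; lra)) as HD.
      fold y Sv in HD. rewrite Ha0 in HD. replace (0 + eps) with eps in HD by ring.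
      pose proof (tangent (h a) (f a) (hhf a) eps 0 ltac:(lra) ltac:(lra)) as HT.
      pose proof (hhf a) as [_ [_ [Hh0 _]]]. rewrite Hh0 in HD, HT.
      pose proof (chord (h b) (f b) (hhf b) y eps ltac:(lra) Hy1) as HC.
      specialize (Hf eps ltac:(lra)).
      assert (E1 : - f a eps * (0 - eps) = eps * f a eps) by ring.
      assert (E2 : eps / y * h b y = eps * (h b y / y)) by (field; lra).
      assert (E3 : eps * f a eps < eps * (- K)) by (apply Rmult_lt_compat_l; lra).
      assert (E4 : eps * K = eps * (h b y / y) + eps * Sv a - eps * Sv b) by (unfold K; ring).
      nra. }
    assert (HL : forall a b, a <> b -> - f a (pstar a) + f b (pstar b) - (Sv a - Sv b) <= 0).
    { intros a b Hab.
      pose proof (prob_two pstar a b hp Hab) as H2.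
      pose proof (Hpos a) as Pa. pose proof (Hpos b) as Pb.
      destruct (Rle_dec (- f a (pstar a) + f b (pstar b) - (Sv a - Sv b)) 0) as [|Hn]; auto.
      exfalso. set (L := - f a (pstar a) + f b (pstar b) - (Sv a - Sv b)) in *.
      pose proof (hhf a) as [_ [_ [_ [_ [Hda _]]]]].
      pose proof (hhf b) as [_ [_ [_ [_ [Hdb _]]]]].
      destruct (Hda (pstar a) ltac:(lra) (L / 4) ltac:(lra)) as [d1 Hd1].
      destruct (Hdb (pstar b) ltac:(lra) (L / 4) ltac:(lra)) as [d2 Hd2].
      pose proof (cond_pos d1). pose proof (cond_pos d2).
      set (eps := Rmin (Rmin d1 d2 / 2) (pstar b / 2)).
      assert (E0 : 0 < Rmin d1 d2) by (apply Rmin_pos; lra).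
      assert (He1 : 0 < eps) by (apply Rmin_pos; lra).
      assert (He2 : eps <= Rmin d1 d2 / 2) by apply Rmin_l.
      assert (He3 : eps <= pstar b / 2) by apply Rmin_r.
      pose proof (Rmin_l d1 d2). pose proof (Rmin_r d1 d2).
      specialize (Hd1 eps ltac:(lra) ltac:(rewrite Rabs_pos_eq; lra)).
      specialize (Hd2 (- eps) ltac:(lra) ltac:(rewrite Rabs_Ropp, Rabs_pos_eq; lra)).
      pose proof (pert_le h n H theta pstar c a b eps hp Hc HVP Hab ltac:(lra) ltac:(lra)) as HD.
      fold Sv in HD.
      set (qa := (h a (pstar a + eps) - h a (pstar a)) / eps) in Hd1.
      set (qb := (h b (pstar b + - eps) - h b (pstar b)) / - eps) in Hd2.
      assert (Ea : h a (pstar a + eps) - h a (pstar a) = eps * qa) by (unfold qa; field; lra).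
      assert (Eb : h b (pstar b - eps) - h b (pstar b) = - eps * qb).
      { unfold qb. replace (pstar b + - eps) with (pstar b - eps) by ring. field; lra. }
      rewrite Ea, Eb in HD.
      assert (HD' : eps * (qa - qb - (Sv a - Sv b)) <= eps * 0) by lra.
      apply Rmult_le_reg_l in HD'; auto.
      apply Rabs_def2 in Hd1. apply Rabs_def2 in Hd2.
      unfold L in *. lra. }
    destruct (prob_pos pstar hp) as [a0 _].
    exists (- f a0 (pstar a0) - Sv a0). intros a. split; auto.
    destruct (classic (a = a0)) as [->|Hne]; [ring|].
    pose proof (HL a a0 Hne). pose proof (HL a0 a (not_eq_sym Hne)). lra.
  - intros [alpha Hal].
    destruct hfin as [c Hc]. exists c. split; auto.
    intros p Hp v Hv.
    assert (hnn : forall (q : A -> R), is_prob q -> forall a, 0 <= h a (q a)).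
    { intros q Hq a. apply (h_nonneg _ _ (hhf a)). split; [apply (proj1 Hq)|apply prob_le1; auto]. }
    destruct v as [r| |]; [| |simpl; auto].
    all: destruct (comps_of_functional h n H theta p _ hH Hp (hnn p Hp) Hv ltac:(discriminate))
      as [vI [vH [Hs Hcs]]].
    all: destruct (comps_of_functional h n H theta pstar _ hH hp (hnn pstar hp) Hc ltac:(discriminate))
      as [vI' [vH' [Hs' Hcs']]].
    all: pose proof (comps_fin2 _ _ _ c (fun k Hk => proj1 (Hcs' k Hk)) Hs') as Hsum.
    all: set (U := fun a => sumG (CG h H theta pstar) (seq 0 (S n)) a + alpha * (p a + - (1) * pstar a)).
    all: assert (HU : HasSum U (c + alpha * (1 + - (1) * 1)))
           by (apply HasSum_plus; auto; apply HasSum_scal, HasSum_plus;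
               [apply (proj2 Hp)|apply HasSum_scal, (proj2 hp)]).
    all: assert (Hle : forall a, sumG (CG h H theta p) (seq 0 (S n)) a <= U a).
    all: try (intros a; unfold U; rewrite !CG_sum; fold Sv;
      destruct (Hal a) as [Pa Fa];
      destruct (Rlt_le_dec (pstar a) 1) as [Hlt|Hge];
      [ pose proof (tangent (h a) (f a) (hhf a) (pstar a) (p a) ltac:(lra)
          ltac:(split; [apply (proj1 Hp)|apply prob_le1; auto])) as HT;
        rewrite Fa in HT;
        assert (E : - (- alpha - Sv a) * (p a - pstar a) = alpha * (p a - pstar a) + Sv a * (p a - pstar a)) by ring;
        nra
      | assert (Hall : forall y, y = a);
        [ intros y; apply NNPP; intros Hya;
          pose proof (prob_two pstar a y hp (not_eq_sym Hya)); pose proof (proj1 (Hal y)); lra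
        | pose proof (prob_single p a Hp Hall) as P1;
          pose proof (prob_le1 pstar a hp) as P2;
          assert (pstar a = 1) as P3 by lra; rewrite P1, P3; lra ] ]).
    all: destruct (comps_main _ _ _ _ Hcs Hs U _ HU Hle) as [W [HW HsW]].
    all: try discriminate.
    inversion HW; subst. simpl.
    pose proof (HasSum_le _ _ _ _ Hle HsW HU). lra.
Qed.
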